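(* Let $G=(V,E)$ be a graph, let $H\subseteq G$ be a clique (complete subgraph), and let $G'=(V\cup\{v'\},E')$ be obtained by adding a new vertex $v'$ adjacent to every vertex of $H$ and to no other vertex of $G$. If $G'$ is generically globally rigid in $\mathbb{R}^d$, then $G$ is generically globally rigid in $\mathbb{R}^d$.
   Context: A framework is a pair $(G,\mathbf{p})$ with $\mathbf{p}:V\to\mathbb{R}^d$. Frameworks $(G,\mathbf{p})$, $(G,\mathbf{q})$ are equivalent if $\|\mathbf{p}(u)-\mathbf{p}(v)\|=\|\mathbf{q}(u)-\mathbf{q}(v)\|$ for every edge $(u,v)$, and congruent if this holds for all $u,v\in V$. $(G,\mathbf{p})$ is globally rigid if every framework equivalent to it is congruent to it. A configuration is generic if its coordinates satisfy no nontrivial polynomial equation with rational coefficients; $G$ is generically globally rigid in $\mathbb{R}^d$ if every generic $d$-dimensional framework of $G$ is globally rigid (global rigidity is known to be a generic property: either all or no generic configurations of a graph are globally rigid). *)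

(* Defs.v *)
(* the real numbers are an arbitrary [realType]
   (every realType is isomorphic to the usual reals). *)
From HB Require Import structures.
From mathcomp Require Import all_boot all_order all_algebra.
From mathcomp Require Import reals.
From mathcomp Require Import mpoly.

Set Implicit Arguments.
Unset Strict Implicit.
Unset Printing Implicit Defensive.

Import Order.TTheory GRing.Theory Num.Theory.
Local Open Scope ring_scope.

(* A (simple) graph on a finite vertex type V is an edge relation [e : rel V];
   (u,v) is an edge iff [e u v].  A framework is a map [p : V -> 'rV[R]_d]. *)

Definition sqdist (R : realType) (d : nat) (x y : 'rV[R]_d) : R :=
  \sum_(j < d) (x 0 j - y 0 j) ^+ 2.

Definition simple_graph (V : finType) (e : rel V) : Prop :=
  ssrbool.symmetric e /\ irreflexive e.

Definition equivalent (R : realType) (d : nat) (V : finType) (e : rel V)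
    (p q : V -> 'rV[R]_d) : Prop :=
  forall u v, e u v -> sqdist (p u) (p v) = sqdist (q u) (q v).

Definition congruent (R : realType) (d : nat) (V : finType)
    (p q : V -> 'rV[R]_d) : Prop :=
  forall u v, sqdist (p u) (p v) = sqdist (q u) (q v).

Definition globally_rigid (R : realType) (d : nat) (V : finType) (e : rel V)
    (p : V -> 'rV[R]_d) : Prop :=
  forall q : V -> 'rV[R]_d, equivalent e p q -> congruent p q.

Definition coords (R : realType) (d : nat) (V : finType) (p : V -> 'rV[R]_d)
    (k : 'I_#|{: V * 'I_d}|) : R :=
  let vj := enum_val k in p vj.1 0 vj.2.

Definition generic (R : realType) (d : nat) (V : finType)
    (p : V -> 'rV[R]_d) : Prop :=
  forall P : {mpoly rat[#|{: V * 'I_d}|]},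
    P != 0 -> mmap (@ratr R) (coords p) P != 0.

Definition generically_globally_rigid (R : realType) (d : nat) (V : finType)
    (e : rel V) : Prop :=
  forall p : V -> 'rV[R]_d, generic p -> globally_rigid e p.

Definition is_clique (V : finType) (e : rel V) (H : {set V}) : Prop :=
  forall u v, u \in H -> v \in H -> u != v -> e u v.

(* G' : add a new vertex [None] adjacent exactly to the vertices of H *)
Definition cone_ext (V : finType) (e : rel V) (H : {set V}) : rel (option V) :=
  fun x y =>
    match x, y with
    | Some u, Some v => e u v
    | None, Some v => v \in H
    | Some u, None => u \in H
    | None, None => false
    end.

(* Main.v *)
Require Import Defs.
From HB Require Import structures.
From mathcomp Require Import all_boot all_order all_algebra.
From mathcomp Require Import reals.
From Stdlib Require Import Classical ClassicalEpsilon.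
From mathcomp Require Import boolp classical_sets mpoly.
From mathcomp Require Import ring lra zify.
Set Implicit Arguments.
Unset Strict Implicit.
Unset Printing Implicit Defensive.
Import Order.TTheory GRing.Theory Num.Theory.
Local Open Scope ring_scope.

Section Avoid.
Variable R : realType.

Lemma step_ex (u : {poly R}) (l r : R) : u != 0 -> l < r ->
  exists p : R * R, [/\ l <= p.1, p.1 < p.2, p.2 <= r &
     forall x, p.1 <= x -> x <= p.2 -> ~~ root u x].
Proof.
move=> u0 lr.
set N := size u.
have N0 : (0 < N)%N by rewrite size_poly_gt0.
have N2 : (2 * N)%:R != 0 :> R by rewrite pnatr_eq0 -lt0n muln_gt0 N0.
set h := (r - l) / (2 * N)%:R.
have h0 : 0 < h by rewrite divr_gt0 // ?subr_gt0 // ltr0n muln_gt0 N0.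
have hN : (2 * N)%:R * h = r - l by rewrite mulrC divfK.
apply: NNPP => nex.
have ex (i : 'I_N) : exists x, ((l + (2 * i)%:R * h <= x) &&
     (x <= l + (2 * i).+1%:R * h)) && root u x.
  apply: NNPP => nx; apply: nex.
  exists (l + (2 * i)%:R * h, l + (2 * i).+1%:R * h); split => /=.
  - by rewrite lerDl mulr_ge0 // ltW.
  - by rewrite ltrD2l ltr_pM2r // ltr_nat.
  - have Hi : ((2 * i).+1 <= 2 * N)%N by have := ltn_ord i; lia.
    rewrite -lerBrDl -hN ler_pM2r // ler_nat //.
  - move=> x h1 h2; apply/negP => rx; apply: nx; exists x; by rewrite h1 h2 rx.
have [x Hx] := fin_all_exists ex.
have xlt (i j : 'I_N) : (i < j)%N -> x i < x j.
  move=> ij.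
  have /andP [/andP [_ h1] _] := Hx i.
  have /andP [/andP [h2 _] _] := Hx j.
  apply: (le_lt_trans h1); apply: (lt_le_trans _ h2).
  by rewrite ltrD2l ltr_pM2r // ltr_nat; lia.
have : (size [seq x i | i <- enum 'I_N] < N)%N.
  apply: max_poly_roots => //.
  - by apply/allP => y /mapP [i _ ->]; case/andP: (Hx i).
  - rewrite map_inj_uniq ?enum_uniq // => i j xij.
    have [ij|ji|/val_inj //] := ltngtP i j.
      by have := xlt _ _ ij; rewrite xij ltxx.
    by have := xlt _ _ ji; rewrite xij ltxx.
by rewrite size_map size_enum_ord ltnn.
Qed.

Lemma avoid_roots (u : nat -> {poly R}) :
  (forall k, u k != 0) -> exists t, forall k, ~~ root (u k) t.
Proof.
move=> u0.
pose P k (p q : R * R) := [/\ p.1 <= q.1, q.1 < q.2, q.2 <= p.2 &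
     forall x, q.1 <= x -> x <= q.2 -> ~~ root (u k) x].
pose step k p := epsilon (inhabits p) (fun q => p.1 < p.2 -> P k p q).
have stepP k p : p.1 < p.2 -> P k p (step k p).
  move=> lt; apply: (epsilon_spec (inhabits p) (fun q => p.1 < p.2 -> P k p q)) => //.
  have [q Hq] := step_ex (u0 k) lt; by exists q.
pose I := fix I k := if k is k'.+1 then step k' (I k') else ((0 : R), (1 : R)).
have Ilt : forall n, (I n).1 < (I n).2.
  elim => [|n IH] /=; first exact: ltr01.
  by case: (stepP n _ IH).
have Imono k : (I k).1 <= (I k.+1).1 /\ (I k.+1).2 <= (I k).2.
  by case: (stepP k _ (Ilt k)).
have Il m k : (m <= k)%N -> (I m).1 <= (I k).1.
  elim: k => [|k IH]; first by rewrite leqn0 => /eqP ->.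
  rewrite leq_eqVlt => /orP [/eqP -> //| ].
  rewrite ltnS => /IH H; apply: (le_trans H); exact: (Imono k).1.
have Ir m k : (m <= k)%N -> (I k).2 <= (I m).2.
  elim: k => [|k IH]; first by rewrite leqn0 => /eqP ->.
  rewrite leq_eqVlt => /orP [/eqP -> //| ].
  rewrite ltnS => /IH H; apply: le_trans H; exact: (Imono k).2.
have Ilr m k : (I m).1 <= (I k).2.
  apply: (le_trans (Il m (maxn m k) (leq_maxl _ _))).
  apply: (le_trans (ltW (Ilt _))); exact: Ir (leq_maxr _ _).
pose E := range (fun k => (I k).1).
have hsE : has_sup E.
  split; first by exists (I 0%N).1, 0%N.
  by exists (I 0%N).2 => y [k _ <-].
exists (sup E) => k.
case: (stepP k _ (Ilt k)) => _ _ _; apply.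
- by apply: sup_upper_bound => //; exists k.+1.
- by apply: ge_sup; [case: hsE | move=> y [m _ <-]; exact: (Ilr m k.+1)].
Qed.
End Avoid.

Section Iso.
Variables (R : realType) (d : nat).
Local Notation D := (@sqdist R d).
Implicit Types x y a b : 'rV[R]_d.

Lemma sqdist_diff x a b :
  D x a - D x b = \sum_(j < d) (b 0 j - a 0 j) * (2 * x 0 j - a 0 j - b 0 j).
Proof. rewrite /sqdist -sumrB; apply: eq_bigr => j _; ring. Qed.

Lemma sqdistC x y : D x y = D y x.
Proof. rewrite /sqdist; apply: eq_bigr => j _; ring. Qed.

Lemma sqdistxx x : D x x = 0.
Proof. by rewrite /sqdist big1 // => j _; rewrite subrr expr0n. Qed.

Lemma sqdist_eq0 x y : D x y = 0 -> x = y.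
Proof.
move=> /eqP; rewrite /sqdist psumr_eq0; last by move=> j _; exact: sqr_ge0.
move=> /allP H; apply/rowP => j.
by have := H j (mem_index_enum j); rewrite sqrf_eq0 subr_eq0 => /eqP.
Qed.

Definition refl a b x : 'rV[R]_d :=
  x - ((D x a - D x b) / D a b) *: (b - a).

Lemma refl_iso a b x y : a != b -> D (refl a b x) (refl a b y) = D x y.
Proof.
move=> nab.
have Dn : D a b != 0 by apply/eqP => /sqdist_eq0; apply/eqP.
rewrite /refl.
set c := (D x a - D x b) / D a b.
set c' := (D y a - D y b) / D a b.
have E1 : (c - c') * D a b = 2 * \sum_(j < d) (x 0 j - y 0 j) * (b 0 j - a 0 j).
  rewrite mulrBl /c /c' !divfK // !sqdist_diff -sumrB mulr_sumr.
  by apply: eq_bigr => j _; ring.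
have E2 : D a b = \sum_(j < d) (b 0 j - a 0 j) ^+ 2.
  by rewrite sqdistC.
have -> : D (x - c *: (b - a)) (y - c' *: (b - a)) =
   D x y - 2 * (c - c') * \sum_(j < d) (x 0 j - y 0 j) * (b 0 j - a 0 j)
   + (c - c') ^+ 2 * \sum_(j < d) (b 0 j - a 0 j) ^+ 2.
  rewrite /sqdist mulr_sumr mulr_sumr -sumrB -big_split /=.
  by apply: eq_bigr => j _; rewrite !mxE; ring.
rewrite -E2.
have -> : (c - c') ^+ 2 * D a b = (c - c') * ((c - c') * D a b) by ring.
rewrite E1; ring.
Qed.

Lemma refl_ab a b : a != b -> refl a b a = b.
Proof.
move=> nab.
have Dn : D a b != 0 by apply/eqP => /sqdist_eq0; apply/eqP.
rewrite /refl sqdistxx sub0r mulNr divff // scaleN1r opprK.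
by rewrite addrC subrK.
Qed.

Lemma refl_fix a b x : D x a = D x b -> refl a b x = x.
Proof. by move=> E; rewrite /refl E subrr mul0r scale0r subr0. Qed.

Lemma iso_ext (V : eqType) (p q : V -> 'rV[R]_d) (s : seq V) :
  {in s &, forall u v, D (p u) (p v) = D (q u) (q v)} ->
  exists f : 'rV[R]_d -> 'rV[R]_d,
    (forall x y, D (f x) (f y) = D x y) /\ {in s, forall u, f (p u) = q u}.
Proof.
elim: s => [|u s IH] H.
  by exists id; split.
have [f [fiso fpq]] : exists f : 'rV[R]_d -> 'rV[R]_d,
    (forall x y, D (f x) (f y) = D x y) /\ {in s, forall u, f (p u) = q u}.
  by apply: IH => v w vs ws; apply: H; rewrite inE ?vs ?ws orbT.
have [eab|nab] := eqVneq (f (p u)) (q u).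
  exists f; split => // v; rewrite inE => /orP [/eqP -> //|]; exact: fpq.
exists (fun x => refl (f (p u)) (q u) (f x)); split.
  by move=> x y; rewrite refl_iso // fiso.
move=> v; rewrite inE => /orP [/eqP -> |vs]; first exact: refl_ab.
rewrite /= (fpq v vs) refl_fix // -[in LHS](fpq v vs) fiso H ?inE ?eqxx ?vs ?orbT //.
Qed.
End Iso.

Lemma mpoly_morph_eq n (S : comNzRingType) (F G : {rmorphism {mpoly rat[n]} -> S}) :
  (forall c, F c%:MP = G c%:MP) -> (forall i, F 'X_i = G 'X_i) -> F =1 G.
Proof.
move=> HC HX p; rewrite (mpolyE p) !rmorph_sum; apply: eq_bigr => m _.
rewrite -mul_mpolyC !rmorphM HC; congr (_ * _).
rewrite mpolyXE_id !rmorph_prod; apply: eq_bigr => i _.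
by rewrite !rmorphXn HX.
Qed.


Lemma mmapXU n (S : comNzRingType) (f : {rmorphism rat -> S}) (h : 'I_n -> S) i :
  mmap f h 'X_i = h i.
Proof. by rewrite mmapX mmap1U. Qed.

Definition rindep (R : realType) n (a : 'I_n -> R) :=
  forall P : {mpoly rat[n]}, P != 0 -> mmap (@ratr R) a P != 0.

Lemma sub_indep (R : realType) n m (a : 'I_n -> R) (s : 'I_m -> 'I_n) :
  injective s -> rindep a -> rindep (a \o s).
Proof.
move=> sinj ia P P0.
pose lq := [tuple ('X_(s i) : {mpoly rat[n]}) | i < m].
pose back := [tuple (if [pick i | s i == j] is Some i then 'X_i else 0 : {mpoly rat[m]}) | j < n].
have E1 : mmap (@ratr R) a (comp_mpoly lq P) = mmap (@ratr R) (a \o s) P.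
  apply: (mpoly_morph_eq (F := mmap (@ratr R) a \o comp_mpoly lq)) => [c|i] /=.
    by rewrite comp_mpolyC !mmapC.
  by rewrite comp_mpolyXU -tnth_nth tnth_mktuple !mmapXU.
have E2 : comp_mpoly back (comp_mpoly lq P) = P.
  apply: (mpoly_morph_eq (F := comp_mpoly back \o comp_mpoly lq) (G := idfun)) => [c|i] /=.
    by rewrite !comp_mpolyC.
  rewrite comp_mpolyXU -tnth_nth tnth_mktuple comp_mpolyXU -tnth_nth tnth_mktuple.
  case: pickP => [j /eqP /sinj -> //|/(_ i)]; by rewrite eqxx.
rewrite -E1; apply: ia; apply: contra P0 => /eqP Q0.
by rewrite -E2 Q0 rmorph0.
Qed.

Local Notation widen := (widen_ord (leqnSn _)).
Section Ext1.
Variable R : realType.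

Definition bext n (a : 'I_n -> R) (t : R) (i : 'I_n.+1) : R :=
  if insub (nat_of_ord i) : option 'I_n is Some j then a j else t.

Lemma muniXU n (i : 'I_n.+1) :
  muni ('X_i : {mpoly rat[n.+1]}) =
  if insub (nat_of_ord i) : option 'I_n is Some j then ('X_j)%:P else 'X.
Proof.
rewrite /muni mmapX mmap1U /=.
case: splitP => [j /= ij|j /= ij].
  rewrite insubT ?ij // => H; congr ('X__)%:P; exact: val_inj.
rewrite insubF // ij ord1 addn0 ltnn //.
Qed.

Lemma eval_muni n (a : 'I_n -> R) t (P : {mpoly rat[n.+1]}) :
  mmap (@ratr R) (bext a t) P = (map_poly (mmap (@ratr R) a) (muni P)).[t].
Proof.
apply: (mpoly_morph_eq (F := mmap (@ratr R) (bext a t))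
   (G := horner_eval t \o map_poly (mmap (@ratr R) a) \o (@muni n rat))) => [c|i] /=.
  by rewrite muniC map_polyC /= horner_evalE hornerC !mmapC.
rewrite muniXU mmapXU /bext; case: insub => [j|].
  by rewrite map_polyC /= horner_evalE hornerC /= mmapXU.
by rewrite map_polyX horner_evalE hornerX.
Qed.

Lemma mnm_split n (j m : 'X_{1..n.+1}) :
  (j == m) = ([multinom j (widen i) | i < n] == [multinom m (widen i) | i < n])
             && (j ord_max == m ord_max).
Proof.
apply/eqP/andP => [-> //|[/eqP E /eqP Emax]].
apply/mnmP => i; case: (unliftP ord_max i) => [k ->|-> //].
have -> : lift ord_max k = widen k by apply: val_inj; rewrite /= /bump leqNgt ltn_ord.
by have := congr1 (fun mm : 'X_{1..n} => mm k) E; rewrite !mnmE.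
Qed.

Lemma muni_coef n (P : {mpoly rat[n.+1]}) (m : 'X_{1..n.+1}) :
  ((muni P)`_(m ord_max))@_[multinom m (widen i) | i < n] = P@_m.
Proof.
have -> : P@_m = (\sum_(j <- msupp P) P@_j *: 'X_[j])@_m by rewrite -mpolyE.
rewrite muniE coef_sum !raddf_sum /=.
apply: eq_bigr => j _.
rewrite coefZ coefXn mulr_natr mcoeffMn !mcoeffZ !mcoeffX mnm_split [m ord_max == _]eq_sym.
by case: (_ == _); case: (_ == _); rewrite /= ?mulr1 ?mulr0 ?mulr0n ?mulr1n.
Qed.

Lemma muni_eval_neq0 n (a : 'I_n -> R) (P : {mpoly rat[n.+1]}) :
  rindep a -> P != 0 -> map_poly (mmap (@ratr R) a) (muni P) != 0.
Proof.
move=> ia P0.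
have [m Pm] : exists m, P@_m != 0.
  apply: NNPP => H; move/eqP: P0; apply; apply/mpolyP => m; rewrite mcoeff0.
  by apply/eqP; apply/negPn/negP => Hm; apply: H; exists m.
have Q0 : (muni P)`_(m ord_max) != 0.
  by apply: contraNneq Pm => E; rewrite -muni_coef E mcoeff0.
apply/eqP => E; have := congr1 (fun q : {poly R} => q`_(m ord_max)) E.
rewrite coef_map coef0 => /eqP; apply/negP; exact: ia.
Qed.

Lemma ext1 n (a : 'I_n -> R) : rindep a -> exists t, rindep (bext a t).
Proof.
move=> ia.
pose bld (s : seq ('X_{1..n.+1} * rat)) : {mpoly rat[n.+1]} :=
  \sum_(x <- s) x.2 *: 'X_[x.1].
pose us s := map_poly (mmap (@ratr R) a) (muni (bld s)).
pose u k := if unpickle k is Some s then (if us s != 0 then us s else 1) else 1.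
have u0 k : u k != 0.
  rewrite /u; case: unpickle => [s|]; last exact: oner_neq0.
  by case: ifP => // _; exact: oner_neq0.
have [t Ht] := avoid_roots u0.
exists t => P P0.
pose s := [seq (m, P@_m) | m <- msupp P].
have Ps : bld s = P by rewrite /bld big_map /= -mpolyE.
have usn : us s != 0 by rewrite /us Ps; exact: muni_eval_neq0.
have := Ht (pickle s); rewrite /u pickleK usn /root.
by rewrite /us Ps -eval_muni.
Qed.
End Ext1.

Section ExtK.
Variable R : realType.

Lemma rindep_eq n (a a' : 'I_n -> R) : a =1 a' -> rindep a -> rindep a'.
Proof.
move=> E ia P P0; have := ia P P0.
suff -> : mmap (@ratr R) a P = mmap (@ratr R) a' P by [].
by rewrite /mmap; apply: eq_bigr => m _; rewrite (mmap1_eq _ E).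
Qed.

Definition cat_fun n k (a : 'I_n -> R) (b : 'I_k -> R) (i : 'I_(n + k)) : R :=
  match split i with inl j => a j | inr j => b j end.

Lemma extk k n (a : 'I_n -> R) : rindep a -> exists b : 'I_k -> R, rindep (cat_fun a b).
Proof.
elim: k => [|k IH] ia.
  exists (fun _ => 0).
  apply: (rindep_eq (a := a \o cast_ord (addn0 n))); last first.
    by apply: sub_indep => //; exact: cast_ord_inj.
  move=> i /=; rewrite /cat_fun; case: splitP => [j ij|j]; last by case: j.
  by congr a; apply: val_inj.
have [b ib] := IH ia.
have [t it] := ext1 ib.
exists (bext b t).
apply: (rindep_eq (a := bext (cat_fun a b) t \o cast_ord (addnS n k))); last first.
  by apply: sub_indep => //; exact: cast_ord_inj.
move=> i /=; rewrite /cat_fun /bext /=.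
case: splitP => [j ij|j ij].
  rewrite insubT ?ij; first by rewrite ltn_addr.
  move=> H; case: splitP => [j1 /= j1j|j1 /= j1j].
    by congr a; apply: val_inj.
  by have := ltn_ord j; move: j1j => /= j1j; lia.
case: insubP => [j0 j0lt j0v|j0ge].
  rewrite insubT; first by move: j0lt; rewrite ij; lia.
  move=> H; simpl in *; case: splitP => [j1 /= j1j|j1 /= j1j].
    by have := ltn_ord j1; lia.
  by congr b; apply: val_inj => /=; lia.
rewrite insubF //; move: j0ge; rewrite ij => /negP Hn; apply/negP => Hj; apply: Hn; lia.
Qed.

Lemma generic_ext (V : finType) (d : nat) (p : V -> 'rV[R]_d) :
  generic p -> exists x : 'rV[R]_d,
    generic (fun o : option V => if o is Some v then p v else x).
Proof.
move=> gp.
have [b ib] := extk d (gp : rindep (coords p)).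
exists (\row_j b j).
set p' := (fun o : option V => _).
pose N := #|{: V * 'I_d}|.
pose sg (k : 'I_#|{: option V * 'I_d}|) : 'I_(N + d) :=
  match enum_val k with
  | (Some v, j) => lshift d (enum_rank ((v, j) : V * 'I_d))
  | (None, j) => rshift N j
  end.
have sinj : injective sg.
  move=> k1 k2; rewrite /sg.
  case E1: (enum_val k1) => [[v1|] j1]; case E2: (enum_val k2) => [[v2|] j2].
  - move/lshift_inj/enum_rank_inj => E.
    by apply: enum_val_inj; rewrite E1 E2; case: E => -> ->.
  - move/(congr1 val) => /= E; have := ltn_ord (enum_rank (v1, j1)).
    by rewrite E ltnNge leq_addr.
  - move/(congr1 val) => /= E; have := ltn_ord (enum_rank (v2, j2)).
    by rewrite -E ltnNge leq_addr.
  - by move/rshift_inj => E; apply: enum_val_inj; rewrite E1 E2 E.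
apply: (rindep_eq (a := cat_fun (coords p) b \o sg)); last exact: sub_indep.
move=> k; rewrite /= /sg /coords /cat_fun.
case: (enum_val k) => [[v|] j] /=.
  by rewrite -[lshift _ _]/(unsplit (inl _)) unsplitK enum_rankK.
by rewrite -[rshift _ _]/(unsplit (inr _)) unsplitK mxE.
Qed.
End ExtK.

Theorem proposition8 (R : realType) (d : nat) (V : finType) (e : rel V)
    (H : {set V}) :
  simple_graph e -> is_clique e H ->
  generically_globally_rigid R d (cone_ext e H) ->
  generically_globally_rigid R d e.
Proof.
move=> _ cl gG' p gp q eqpq.
have [x gx] := generic_ext gp.
have hH : {in enum H &, forall u v, sqdist (p u) (p v) = sqdist (q u) (q v)}.
  move=> u v; rewrite !mem_enum => uH vH.
  have [->|nuv] := eqVneq u v; first by rewrite !sqdistxx.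
  exact: eqpq (cl u v uH vH nuv).
have [f [fiso fpq]] := @iso_ext R d V p q (enum H) hH.
pose q' := fun o : option V => if o is Some v then q v else f x.
have eq' : equivalent (cone_ext e H) (fun o : option V => if o is Some v then p v else x) q'.
  case=> [u|] [v|] //= E.
  - exact: eqpq.
  - by rewrite -(fpq u) ?mem_enum // fiso.
  - by rewrite -(fpq v) ?mem_enum // fiso.
have cong := gG' _ gx q' eq'.
by move=> u v; exact: (cong (Some u) (Some v)).
Qed.
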